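(* Let $\theta(3)$ be the quiver with two vertices $1,2$ and three arrows $a,b,c$ from $1$ to $2$. Let $W\in\operatorname{Rep}(\theta(3),(3,3))$ be such that $W(a),W(b),W(c)$ are linearly independent skew-symmetric $3\times3$ matrices, and let $\sigma=(1,-1)$ (i.e. $\sigma(1)=1$, $\sigma(2)=-1$). Then $n\sigma\in S(W)$ for some integer $n\ge1$, but $\sigma\notin S(W)$; in particular $S(W)$ is not saturated.
   Context: Work over an algebraically closed field $k$ of characteristic zero. $\operatorname{Rep}(\theta(3),(3,3))$ is the space of triples of $3\times3$ matrices, acted on by $\operatorname{GL}_3\times\operatorname{GL}_3$ via $(g_1,g_2)\cdot W(a)=g_2W(a)g_1^{-1}$. $\operatorname{SI}_\sigma$ is the space of polynomial functions $f$ with $g\cdot f=\det(g_1)^{\sigma(1)}\det(g_2)^{\sigma(2)}f$, and $S(W)=\{\sigma\in\mathbb{Z}^2\mid \exists f\in\operatorname{SI}_\sigma,\ f(W)\neq0\}$. *)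

(* Defs.v *)
From HB Require Import structures.
From mathcomp Require Import all_boot all_order all_algebra.
Set Implicit Arguments. Unset Strict Implicit. Unset Printing Implicit Defensive.
Import Order.TTheory GRing.Theory Num.Theory.
Local Open Scope ring_scope.

(* A representation of theta(3) of dimension vector (3,3):
   arrows a,b,c are indexed by 'I_3 (a = 0, b = 1, c = 2). *)
Definition rep3 (k : Type) := 'I_3 -> 'M[k]_3.

(* Formal polynomial expressions in the 27 coordinate functions W(x)_{ij}. *)
Inductive pterm (k : Type) : Type :=
| PVar : 'I_3 -> 'I_3 -> 'I_3 -> pterm k
| PConst : k -> pterm k
| PAdd : pterm k -> pterm k -> pterm k
| PMul : pterm k -> pterm k -> pterm k.

Fixpoint peval (k : nzRingType) (t : pterm k) (W : rep3 k) : k :=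
  match t with
  | PVar x i j => W x i j
  | PConst c => c
  | PAdd t1 t2 => peval t1 W + peval t2 W
  | PMul t1 t2 => peval t1 W * peval t2 W
  end.

Definition is_polyfun (k : nzRingType) (f : rep3 k -> k) : Prop :=
  exists t : pterm k, forall W, f W = peval t W.

Definition act (k : fieldType) (g1 g2 : 'M[k]_3) (W : rep3 k) : rep3 k :=
  fun x => g2 *m W x *m invmx g1.

(* Semi-invariant of weight sigma: g . f = det(g1)^s1 det(g2)^s2 f,
   where (g . f)(W) = f(g^{-1} . W). *)
Definition semi_inv (k : fieldType) (sigma : int * int) (f : rep3 k -> k) : Prop :=
  is_polyfun f /\
  forall g1 g2 : 'M[k]_3, g1 \in unitmx -> g2 \in unitmx ->
    forall W : rep3 k,
      f (act (invmx g1) (invmx g2) W) =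
      (\det g1) ^ sigma.1 * (\det g2) ^ sigma.2 * f W.

Definition inS (k : fieldType) (W : rep3 k) (sigma : int * int) : Prop :=
  exists f : rep3 k -> k, semi_inv sigma f /\ f W != 0.

Definition skew_sym (k : nzRingType) (M : 'M[k]_3) : Prop := M^T = - M.

Definition lin_indep3 (k : fieldType) (W : rep3 k) : Prop :=
  forall c : 'I_3 -> k, \sum_(x < 3) c x *: W x = 0 -> forall x, c x = 0.

(* Main.v *)
From Stdlib Require Import Ring Lia.
Require Import Defs.
From HB Require Import structures.
From mathcomp Require Import all_boot all_order all_algebra.
Import Order.TTheory GRing.Theory Num.Theory.
Set Implicit Arguments. Unset Strict Implicit.
Local Open Scope ring_scope.

Section Main.
Variable k : fieldType.
Hypothesis hchar : [pchar k] =i pred0.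

Definition kT : Type := GRing.ComNzRing.sort k.
Definition kadd (x y : kT) : kT := x + y.
Definition kmul (x y : kT) : kT := x * y.
Definition kopp (x : kT) : kT := - x.
Definition ksub (x y : kT) : kT := x - y.
Definition kzero : kT := 0.
Definition kone : kT := 1.
Lemma kRT : @ring_theory kT kzero kone kadd kmul ksub kopp eq.
Proof.
split; rewrite /kadd/kmul/ksub/kopp/kzero/kone; [exact: add0r|exact: addrC|exact: addrA|exact: mul1r|exact: mulrC|exact: mulrA|exact: mulrDl|by []|exact: subrr].
Qed.
Add Ring kRing : kRT.
Lemma kaddE (x y : k) : x + y = kadd x y. Proof. by []. Qed.
Lemma kmulE (x y : k) : x * y = kmul x y. Proof. by []. Qed.
Lemma koppE (x : k) : - x = kopp x. Proof. by []. Qed.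
Lemma kzeroE : 0 = kzero :> k. Proof. by []. Qed.
Lemma koneE : 1 = kone :> k. Proof. by []. Qed.
Ltac kring0 := rewrite -[LHS]addr0 -[RHS]addr0 ?kaddE ?kmulE ?koppE ?kzeroE ?koneE;
  match goal with |- @eq _ ?x ?y => change (@eq kT x y) end; ring.

Lemma pf_ext (f : rep3 k -> k) (V V' : rep3 k) : is_polyfun f ->
  (forall x i j, V x i j = V' x i j) -> f V = f V'.
Proof.
case=> t ht E; rewrite !ht; elim: t {ht} => //= [t1 IH1 t2 IH2|t1 IH1 t2 IH2];
  by rewrite IH1 IH2.
Qed.

Lemma pf_eq (f g : rep3 k -> k) : (forall V, f V = g V) -> is_polyfun g -> is_polyfun f.
Proof. by move=> E [t ht]; exists t => V; rewrite E ht. Qed.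

Lemma pf_const c : is_polyfun (fun _ : rep3 k => c).
Proof. by exists (PConst c). Qed.
Lemma pf_var x i j : is_polyfun (fun V : rep3 k => V x i j).
Proof. by exists (PVar k x i j). Qed.
Lemma pf_add f g : is_polyfun f -> is_polyfun g -> is_polyfun (fun V : rep3 k => f V + g V).
Proof. by move=> [t1 h1] [t2 h2]; exists (PAdd t1 t2) => V /=; rewrite h1 h2. Qed.
Lemma pf_mul f g : is_polyfun f -> is_polyfun g -> is_polyfun (fun V : rep3 k => f V * g V).
Proof. by move=> [t1 h1] [t2 h2]; exists (PMul t1 t2) => V /=; rewrite h1 h2. Qed.
Lemma pf_opp f : is_polyfun f -> is_polyfun (fun V : rep3 k => - f V).
Proof.
move=> h; apply: (@pf_eq _ (fun V => (-1) * f V)); first by move=> V; rewrite mulN1r.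
exact: pf_mul (pf_const _) h.
Qed.

Lemma pf_sum_seq (I : Type) (r : seq I) (P : pred I) (F : I -> rep3 k -> k) :
  (forall i, is_polyfun (F i)) -> is_polyfun (fun V => \sum_(i <- r | P i) F i V).
Proof.
move=> hF; elim: r => [|a r IH].
  by apply: (@pf_eq _ (fun _ => 0)) (pf_const 0) => V; rewrite big_nil.
case Pa: (P a).
  apply: (@pf_eq _ (fun V => F a V + \sum_(i <- r | P i) F i V)) (pf_add (hF a) IH).
  by move=> V; rewrite big_cons Pa.
by apply: (pf_eq _ IH) => V; rewrite big_cons Pa.
Qed.

Lemma pf_sum (I : finType) (P : pred I) (F : I -> rep3 k -> k) :
  (forall i, is_polyfun (F i)) -> is_polyfun (fun V => \sum_(i | P i) F i V).
Proof. exact: pf_sum_seq. Qed.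

Lemma pf_prod_seq (I : Type) (r : seq I) (P : pred I) (F : I -> rep3 k -> k) :
  (forall i, is_polyfun (F i)) -> is_polyfun (fun V => \prod_(i <- r | P i) F i V).
Proof.
move=> hF; elim: r => [|a r IH].
  by apply: (@pf_eq _ (fun _ => 1)) (pf_const 1) => V; rewrite big_nil.
case Pa: (P a).
  apply: (@pf_eq _ (fun V => F a V * \prod_(i <- r | P i) F i V)) (pf_mul (hF a) IH).
  by move=> V; rewrite big_cons Pa.
by apply: (pf_eq _ IH) => V; rewrite big_cons Pa.
Qed.

Lemma pf_prod (I : finType) (P : pred I) (F : I -> rep3 k -> k) :
  (forall i, is_polyfun (F i)) -> is_polyfun (fun V => \prod_(i | P i) F i V).
Proof. exact: pf_prod_seq. Qed.

Definition pfmx m n (A : rep3 k -> 'M[k]_(m, n)) := forall i j, is_polyfun (fun V => A V i j).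

Lemma pf_det n (A : rep3 k -> 'M[k]_n) : pfmx A -> is_polyfun (fun V => \det (A V)).
Proof.
move=> hA; rewrite /determinant; apply: pf_sum => s.
by apply: pf_mul; [exact: pf_const | apply: pf_prod => i; exact: hA].
Qed.

Lemma pfmx_mul m n p (A : rep3 k -> 'M[k]_(m, n)) (B : rep3 k -> 'M[k]_(n, p)) :
  pfmx A -> pfmx B -> pfmx (fun V => A V *m B V).
Proof.
move=> hA hB i j; apply: (@pf_eq _ (fun V => \sum_l A V i l * B V l j)).
  by move=> V; rewrite mxE.
by apply: pf_sum => l; apply: pf_mul.
Qed.

Lemma pfmx_adj n (A : rep3 k -> 'M[k]_n) : pfmx A -> pfmx (fun V => \adj (A V)).
Proof.
move=> hA i j; apply: (@pf_eq _ (fun V => cofactor (A V) j i)).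
  by move=> V; rewrite mxE.
rewrite /cofactor; apply: pf_mul; first exact: pf_const.
by apply: pf_det => a b; apply: (@pf_eq _ (fun V => A V (lift j a) (lift i b))) => [V|]; rewrite ?mxE.
Qed.

Lemma pf_tr n (A : rep3 k -> 'M[k]_n) : pfmx A -> is_polyfun (fun V => \tr (A V)).
Proof. by move=> hA; apply: pf_sum => i; exact: hA. Qed.

Lemma pfmx_var x : pfmx (fun V : rep3 k => V x).
Proof. by move=> i j; exact: pf_var. Qed.

Fixpoint pmap (t : pterm k) : pterm {poly k} :=
  match t with
  | PVar x i j => PVar _ x i j
  | PConst c => PConst c%:P
  | PAdd a b => PAdd (pmap a) (pmap b)
  | PMul a b => PMul (pmap a) (pmap b)
  end.

Lemma peval_pmap t (Vp : rep3 {poly k}) s :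
  (peval (pmap t) Vp).[s] = peval t (fun x => map_mx (fun p => p.[s]) (Vp x)).
Proof.
elim: t => /= [x i j|c|a IHa b IHb|a IHa b IHb]; rewrite ?mxE ?hornerC //.
  by rewrite hornerD IHa IHb.
by rewrite hornerM IHa IHb.
Qed.

Lemma pf_line (f : rep3 k -> k) V U : is_polyfun f ->
  exists R : {poly k}, forall s, R.[s] = f (fun x => V x + s *: U x).
Proof.
move=> hf; case: (hf) => t ht.
exists (peval (pmap t) (fun x => map_mx polyC (V x) + 'X *: map_mx polyC (U x))) => s.
rewrite peval_pmap -ht; apply: pf_ext => // x i j.
by rewrite !mxE hornerD hornerC hornerM hornerX hornerC.
Qed.

Lemma natr_injk : injective (fun n : nat => n%:R : k).
Proof.
have h0 := (iffLR (pcharf0P k) hchar).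
move=> m n /= E; apply/eqP; wlog le_mn : m n E / (m <= n)%N.
  by move=> H; case: (leqP m n) => [|/ltnW] h; [|rewrite eq_sym]; apply: H.
rewrite eqn_leq le_mn /= -subn_eq0 -h0 natrB // E subrr //.
Qed.

Lemma poly_all0 (p : {poly k}) : (forall s, p.[s] = 0) -> p = 0.
Proof.
move=> h; apply: (@roots_geq_poly_eq0 _ p [seq i%:R | i <- iota 0 (size p)]).
- by apply/allP => x /mapP [i _ ->]; rewrite /root h.
- by rewrite map_inj_uniq ?iota_uniq //; exact: natr_injk.
- by rewrite size_map size_iota.
Qed.

Lemma poly_eqall (p q : {poly k}) : (forall s, p.[s] = q.[s]) -> p = q.
Proof.
move=> h; apply/eqP; rewrite -subr_eq0; apply/eqP/poly_all0 => s.
by rewrite hornerD hornerN h subrr.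
Qed.

Lemma char_eval (A : 'M[k]_3) s : (char_poly (- A)).[s] = \det (A + s%:M).
Proof.
rewrite -horner_evalE -det_map_mx; congr (\det _); apply/matrixP => i j.
rewrite !mxE; change ((('X *+ (i == j) - (- A i j)%:P).[s]) = A i j + s *+ (i == j)).
rewrite hornerD hornerN hornerMn hornerX hornerC.
by rewrite opprK addrC.
Qed.

Definition Ux (x : 'I_3) : rep3 k := fun b => if b == x then 1%:M else 0.

Lemma pf_dense (F : rep3 k -> k) x : is_polyfun F ->
  (forall V, V x \in unitmx -> F V = 0) -> forall V, F V = 0.
Proof.
move=> hF H V; have [R hR] := pf_line V (Ux x) hF.
have RD0 : R * char_poly (- V x) = 0.
  apply: poly_all0 => s; rewrite hornerM char_eval.
  have [d0|dn0] := eqVneq (\det (V x + s%:M)) 0; first by rewrite d0 mulr0.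
  rewrite hR H ?mul0r // /Ux eqxx scale_scalar_mx mulr1 unitmxE unitfE //.
have R0 : R = 0.
  by move/eqP: RD0; rewrite mulf_eq0 (negbTE (monic_neq0 (char_poly_monic _))) orbF => /eqP.
have := hR 0; rewrite R0 horner0 => ->; apply: pf_ext => // b i j.
by rewrite scale0r addr0.
Qed.

Definition mkm (f : nat -> nat -> k) : 'M[k]_3 := \matrix_(i, j) f i j.

Lemma det2 (A : 'M[k]_2) : \det A = A 0 0 * A 1 1 - A 0 1 * A 1 0.
Proof.
rewrite (expand_det_row _ 0) !big_ord_recr big_ord0 /= /cofactor !det_mx11 !mxE /=.
Abort.

Lemma det3 f : \det (mkm f) =
  f 0%N 0%N * f 1%N 1%N * f 2%N 2%N - f 0%N 0%N * f 1%N 2%N * f 2%N 1%N - f 0%N 1%N * f 1%N 0%N * f 2%N 2%N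
  + f 0%N 1%N * f 1%N 2%N * f 2%N 0%N + f 0%N 2%N * f 1%N 0%N * f 2%N 1%N - f 0%N 2%N * f 1%N 1%N * f 2%N 0%N.
Proof.
rewrite (expand_det_row _ 0) !big_ord_recr big_ord0 /= /cofactor.
rewrite !(expand_det_row _ 0) !big_ord_recr !big_ord0 /= /cofactor !det_mx11 !mxE /bump /=.
unfold bump; rewrite -?plusE /= ?expr0 ?expr1 ?expr2; kring0.
Qed.

Definition nx (i : nat) : nat := match i with 0 => 1 | 1 => 2 | _ => 0 end.

Lemma adj3 f : \adj (mkm f) = mkm (fun i j =>
  f (nx j) (nx i) * f (nx (nx j)) (nx (nx i)) - f (nx j) (nx (nx i)) * f (nx (nx j)) (nx i)).
Proof.
apply/matrixP => i j; rewrite !mxE /cofactor.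
rewrite (expand_det_row _ 0) !big_ord_recr !big_ord0 /= /cofactor !det_mx11 !mxE.
case: i => [[|[|[|//]]] ?]; case: j => [[|[|[|//]]] ?];
  rewrite ?mxE /= /bump -?plusE /= ?exprS ?expr0; kring0.
Qed.

Lemma mulmkm f g : mkm f *m mkm g = mkm (fun i j => f i 0%N * g 0%N j + f i 1%N * g 1%N j + f i 2%N * g 2%N j).
Proof.
apply/matrixP => i j; rewrite !mxE !big_ord_recr big_ord0 /= !mxE add0r //.
Qed.

Lemma trmkm f : \tr (mkm f) = f 0%N 0%N + f 1%N 1%N + f 2%N 2%N.
Proof. by rewrite /mxtrace !big_ord_recr big_ord0 /= !mxE add0r. Qed.

Lemma mkmE (A : 'M[k]_3) : A = mkm (fun i j => A (inord i) (inord j)).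
Proof. by apply/matrixP => i j; rewrite mxE !inord_val. Qed.

Definition crf (a0 a1 a2 : k) (i j : nat) : k :=
  match i, j with
  | 0, 1 => - a2 | 0, 2 => a1 | 1, 0 => a2 | 1, 2 => - a0 | 2, 0 => - a1 | 2, 1 => a0
  | _, _ => 0 end.

Definition f1 (V : rep3 k) : k := \tr (V 1 *m \adj (V 0) *m V 1 *m \adj (V 2)).

Definition U3 (a0 a1 a2 b0 b1 b2 c0 c1 c2 : k) (i j : nat) : k :=
  match i, j with
  | 0, 0 => a0 | 0, 1 => a1 | 0, _ => a2
  | 1, 0 => b0 | 1, 1 => b1 | 1, _ => b2
  | _, 0 => c0 | _, 1 => c1 | _, _ => c2 end.

Lemma f1_cr a0 a1 a2 b0 b1 b2 c0 c1 c2 :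
  \tr (mkm (crf b0 b1 b2) *m \adj (mkm (crf a0 a1 a2)) *m mkm (crf b0 b1 b2)
        *m \adj (mkm (crf c0 c1 c2)))
  = - (\det (mkm (U3 a0 a1 a2 b0 b1 b2 c0 c1 c2))) ^+ 2.
Proof.
rewrite !adj3 !mulmkm trmkm det3 /= expr2; kring0.
Qed.

End Main.

Ltac kring := rewrite -[LHS]addr0 -[RHS]addr0 ?kaddE ?kmulE ?koppE ?kzeroE ?koneE;
  match goal with |- @eq _ ?x ?y => change (@eq (kT _) x y) end; ring.

Section MainC.
Variable k : fieldType.
Hypothesis hchar : [pchar k] =i pred0.
Add Ring kRingC : (kRT k).

Lemma sum3 (F : 'I_3 -> k) : \sum_x F x = F (inord 0) + F (inord 1) + F (inord 2).
Proof.
rewrite !big_ord_recr big_ord0 /= add0r.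
by congr (F _ + F _ + F _); apply: val_inj; rewrite /= inordK.
Qed.

Lemma ord3E : (0 : 'I_3) = inord 0 /\ (1 : 'I_3) = inord 1 /\ (2 : 'I_3) = inord 2.
Proof. by split; [|split]; apply: val_inj; rewrite /= inordK. Qed.

Lemma two_neq0 : (2%:R : k) != 0.
Proof. by rewrite (iffLR (pcharf0P k) hchar). Qed.

Lemma skew_entry (M : 'M[k]_3) : skew_sym M -> forall i j, M j i = - M i j.
Proof. by move=> hM i j; have := congr1 (fun A : 'M[k]_3 => A i j) (hM : M^T = - M); rewrite !mxE. Qed.

Lemma skew_diag (M : 'M[k]_3) : skew_sym M -> forall i, M i i = 0.
Proof.
move=> hM i; have e := skew_entry hM i i.
have : M i i * 2%:R = 0 by rewrite mulr_natr mulr2n {1}e addNr.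
by move/eqP; rewrite mulf_eq0 (negbTE two_neq0) orbF => /eqP.
Qed.

Lemma skew_cr (M : 'M[k]_3) : skew_sym M ->
  M = mkm (crf (M (inord 2) (inord 1)) (M (inord 0) (inord 2)) (M (inord 1) (inord 0))).
Proof.
move=> hM; rewrite {1}(mkmE M); apply/matrixP => i j; rewrite !mxE.
case: i => [[|[|[|//]]] ?]; case: j => [[|[|[|//]]] ?] /=;
  first [ by rewrite skew_diag | by [] | by rewrite (skew_entry hM) ].
Qed.

Lemma pfmx_const m n (A : 'M[k]_(m, n)) : pfmx (fun _ : rep3 k => A).
Proof. by move=> i j; exact: pf_const. Qed.

Lemma pfmx_sub m n (A B : rep3 k -> 'M[k]_(m, n)) : pfmx A -> pfmx B -> pfmx (fun V => A V - B V).
Proof.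
move=> hA hB i j; apply: (@pf_eq k _ (fun V => A V i j + - B V i j)).
  by move=> V; rewrite !mxE.
by apply: pf_add => //; apply: pf_opp.
Qed.

Lemma adjM_gen (h g X : 'M[k]_3) : h \in unitmx -> g \in unitmx ->
  \adj (h *m X *m g) = \adj g *m \adj X *m \adj h.
Proof.
move=> uh ug; apply/matrixP => i j.
pose F := fun V : rep3 k => (\adj (h *m V 0 *m g)) i j - (\adj g *m \adj (V 0) *m \adj h) i j.
have hF : is_polyfun F.
  apply: pf_add; [|apply: pf_opp]; [apply: pfmx_adj|]; apply: pfmx_mul; try apply: pfmx_mul;
    by [exact: pfmx_const | exact: pfmx_var | apply: pfmx_adj; exact: pfmx_var].
suff H0 : forall V, V 0 \in unitmx -> F V = 0.
  by move/eqP: (pf_dense hchar hF H0 (fun _ => X)); rewrite /F subr_eq0 => /eqP.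
move=> V uV; rewrite /F; set Y := V 0 in uV *; apply/eqP; rewrite subr_eq0; apply/eqP; congr (fun A : 'M[k]_3 => A i j).
set M := h *m Y *m g.
have uM : M \in unitmx by rewrite !unitmx_mul uh uV ug.
rewrite -[LHS](mulKmx uM) -[RHS](mulKmx uM); congr (_ *m _).
rewrite (mul_mx_adj M) /M.
rewrite -!mulmxA (mulmxA g) (mul_mx_adj g) mul_scalar_mx -!scalemxAr.
rewrite (mulmxA Y) (mul_mx_adj Y) mul_scalar_mx -!scalemxAr (mul_mx_adj h).
rewrite !scale_scalar_mx !det_mulmx; congr (_%:M); move: (\det h) (\det Y) (\det g) => a b c; kring.
Qed.

Lemma f1_equiv (h g : 'M[k]_3) (V : rep3 k) : h \in unitmx -> g \in unitmx ->
  f1 (fun x => h *m V x *m g) = (\det g) ^+ 2 * (\det h) ^+ 2 * f1 V.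
Proof.
move=> uh ug; rewrite /f1 !adjM_gen //.
set A := V 1; set B := \adj (V 0); set C := \adj (V 2).
rewrite !mulmxA -!(mulmxA _ g (\adj g)) !mul_mx_adj !mul_mx_scalar.
rewrite -!scalemxAl -(mulmxA _ (\adj h) h) mul_adj_mx mul_mx_scalar -!scalemxAl !mxtraceZ.
set Z := A *m B *m A *m C.
have -> : h *m A *m B *m A *m C = h *m Z by rewrite /Z !mulmxA.
rewrite mxtrace_mulC mulmxA mul_adj_mx mul_scalar_mx mxtraceZ.
move: (\det g) (\det h) (\tr Z) => a b c; rewrite !expr2; kring.
Qed.

Lemma f1_semi : semi_inv (2%:Z, - 2%:Z) (@f1 k).
Proof.
split.
  apply: pf_tr; apply: pfmx_mul; [apply: pfmx_mul; [apply: pfmx_mul|]|];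
    by [exact: pfmx_var | apply: pfmx_adj; exact: pfmx_var].
move=> g1 g2 u1 u2 V; rewrite /act.
have -> : f1 (fun x => invmx g2 *m V x *m invmx (invmx g1)) = f1 (fun x => invmx g2 *m V x *m g1).
  by rewrite invmxK.
rewrite f1_equiv ?unitmx_inv // det_inv /= exprVn //.
Qed.

Lemma eqz_lem (a b : k) : a = b -> b = 0 -> a = 0. Proof. by move=> -> . Qed.
Lemma eqzN_lem (a b : k) : a = - b -> b = 0 -> a = 0. Proof. by move=> -> ->; rewrite oppr0. Qed.

Lemma f1_W (W : rep3 k) : (forall x, skew_sym (W x)) -> lin_indep3 W -> f1 W != 0.
Proof.
move=> hs hi; have [e0 [e1 e2]] := ord3E.
rewrite /f1 (skew_cr (hs 1)) (skew_cr (hs 0)) (skew_cr (hs 2)) f1_cr oppr_eq0 expf_eq0 /=.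
rewrite e2 e1 e0.
set U := mkm _; apply/negP => /det0P [v vn0 vU].
pose c := fun x : 'I_3 => v 0 x.
have E : forall l, \sum_x v 0 x * U x l = 0.
  by move=> l; have := congr1 (fun A : 'M[k]_(1,3) => A 0 l) vU; rewrite !mxE.
have E0 := E (inord 0); have E1 := E (inord 1); have E2 := E (inord 2).
rewrite !sum3 /U !mxE !inordK //= in E0 E1 E2.
have hsum : \sum_(x < 3) c x *: W x = 0.
  apply/matrixP => i j; rewrite summxE mxE sum3 !mxE.
  rewrite (skew_cr (hs (inord 0))) (skew_cr (hs (inord 1))) (skew_cr (hs (inord 2))) !mxE /c.
  case: i => [[|[|[|//]]] ?]; case: j => [[|[|[|//]]] ?] /=;
    first [ kring | apply: (eqz_lem _ E0); kring | apply: (eqz_lem _ E1); kring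
          | apply: (eqz_lem _ E2); kring | apply: (eqzN_lem _ E0); kring
          | apply: (eqzN_lem _ E1); kring | apply: (eqzN_lem _ E2); kring ].
have hc := hi c hsum.
by move/eqP: vn0; apply; apply/matrixP => i j; rewrite (ord1 i) mxE; exact: hc.
Qed.

End MainC.

Section MainD.
Variable k : fieldType.
Hypothesis hchar : [pchar k] =i pred0.
Add Ring kRingD : (kRT k).

Lemma poly_nz0 (p : {poly k}) : (forall s, s != 0 -> p.[s] = 0) -> p = 0.
Proof.
move=> h; apply: (@roots_geq_poly_eq0 _ p [seq i.+1%:R | i <- iota 0 (size p)]).
- apply/allP => x /mapP [i _ ->]; rewrite /root h //.
  by rewrite (iffLR (pcharf0P k) hchar).
- by rewrite map_inj_uniq ?iota_uniq // => m n /(natr_injk hchar) [].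
- by rewrite size_map size_iota.
Qed.

Lemma poly_nzeq (p q : {poly k}) : (forall s, s != 0 -> p.[s] = q.[s]) -> p = q.
Proof.
move=> h; apply/eqP; rewrite -subr_eq0; apply/eqP/poly_nz0 => s sn0.
by rewrite hornerD hornerN h // subrr.
Qed.

Lemma revQ (R : {poly k}) u : u != 0 ->
  (\poly_(i < size R) R`_((size R).-1 - i)).[u] = u ^+ (size R).-1 * R.[u^-1].
Proof.
move=> un0; rewrite horner_poly horner_coef big_distrr /=.
rewrite (reindex_inj rev_ord_inj) /=; apply: eq_bigr => i _.
have hi : (i <= (size R).-1)%N by rewrite -ltnS (leq_trans (ltn_ord i)) // leqSpred.
have e1 : (size R - i.+1 = (size R).-1 - i)%N.
  by move: (ltn_ord i); move: (size R) (nat_of_ord i) => n a /ssrnat.ltP hn; rewrite -!minusE; lia.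
have e2 : ((size R).-1 - ((size R).-1 - i) = i)%N.
  by move: (ltn_ord i); move: (size R) (nat_of_ord i) => n a /ssrnat.ltP hn; rewrite -!minusE; lia.
rewrite e1 e2 mulrCA; congr (_ * _).
rewrite -{2}(subnK hi) exprD exprVn -mulrA mulfV ?mulr1 // expf_neq0 //.
Qed.

Lemma hom_add (phi : 'M[k]_3 -> k) :
  (forall l y, l != 0 -> phi (l *: y) = l * phi y) ->
  (forall y z, exists R : {poly k}, forall s, R.[s] = phi (y + s *: z)) ->
  forall y z, phi (y + z) = phi y + phi z.
Proof.
move=> hom pl.
have key : forall y z (R T : {poly k}), (forall s, R.[s] = phi (y + s *: z)) ->
    (forall s, T.[s] = phi (z + s *: y)) -> forall u, u != 0 -> T.[u] = u * R.[u^-1].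
  move=> y z R T hR hT u un0; rewrite hT hR -hom //; congr phi.
  by rewrite scalerDr scalerA mulfV // scale1r addrC.
have deg : forall y z (R T : {poly k}), (forall s, R.[s] = phi (y + s *: z)) ->
    (forall s, T.[s] = phi (z + s *: y)) -> (size R <= 2)%N.
  move=> y z R T hR hT; rewrite leqNgt; apply/negP => h3.
  have eqp : 'X^((size R).-2) * T = \poly_(i < size R) R`_((size R).-1 - i).
    apply: poly_nzeq => u un0; rewrite revQ // hornerM hornerXn (key y z R T) //.
    rewrite mulrA -exprSr; congr (_ ^+ _ * _).
    by move: h3; case: (size R) => [|[|[|n]]].
  have := congr1 (fun p : {poly k} => p`_0) eqp; rewrite coefXnM coef_poly /=.
  have -> : (0 < (size R).-2)%N by move: h3; case: (size R) => [|[|[|n]]].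
  have -> : (0 < size R)%N by move: h3; case: (size R).
  rewrite subn0 => /esym /eqP; rewrite -/(lead_coef R) lead_coef_eq0 => /eqP R0.
  by move: h3; rewrite R0 size_poly0.
move=> y z; have [R hR] := pl y z; have [T hT] := pl z y.
have sR := deg y z R T hR hT; have sT := deg z y T R hT hR.
have hRs : forall s, R.[s] = R`_0 + R`_1 * s.
  by move=> s; rewrite (horner_coef_wide _ sR) !big_ord_recr big_ord0 /= add0r expr0 mulr1 expr1.
have hTs : forall s, T.[s] = T`_0 + T`_1 * s.
  by move=> s; rewrite (horner_coef_wide _ sT) !big_ord_recr big_ord0 /= add0r expr0 mulr1 expr1.
have py : phi y = R`_0 by rewrite -[y]addr0 -(scale0r z) -hR hRs mulr0 addr0.
have pz : phi z = T`_0 by rewrite -[z]addr0 -(scale0r y) -hT hTs mulr0 addr0.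
have pyz : phi (y + z) = R`_0 + R`_1 by rewrite -{1}(scale1r z) -hR hRs mulr1.
have h2 : (1 + 1 : k) != 0 by rewrite -mulr2n two_neq0.
have E1 : T`_0 + T`_1 = R`_0 + R`_1.
  by have := key y z R T hR hT 1 (oner_neq0 _); rewrite hTs hRs invr1 !mulr1 mul1r.
have E2 : T`_0 + T`_1 * (1 + 1) = (1 + 1) * R`_0 + R`_1.
  have := key y z R T hR hT (1 + 1) h2; rewrite hTs hRs => ->.
  by rewrite mulrDr mulrCA mulfV // mulr1.
rewrite pyz py pz; move: E1 E2; move: (R`_0 : k) (R`_1 : k) (T`_0 : k) (T`_1 : k) => r0 r1 t0 t1 E1 E2.
have et1 : t1 = r0 + r1 - t0 by rewrite -E1; kring.
rewrite et1 in E2.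
have : r1 - t0 = 0.
  have -> : r1 - t0 = (t0 + (r0 + r1 - t0) * (1 + 1)) - ((1 + 1) * r0 + r1) by kring.
  by rewrite E2 subrr.
by move/eqP; rewrite subr_eq0 => /eqP ->.
Qed.

End MainD.

Section MainE.
Variable k : fieldType.
Hypothesis hchar : [pchar k] =i pred0.
Add Ring kRingE : (kRT k).

Variable f : rep3 k -> k.
Hypothesis hs : semi_inv (1%:Z, - 1%:Z) f.

Lemma hpf : is_polyfun f. Proof. exact: hs.1. Qed.

Lemma f_left h V : h \in unitmx -> f (fun b => h *m V b) = \det h * f V.
Proof.
move=> uh; have := hs.2 1%:M (invmx h) (unitmx1 k 3) (etrans (unitmx_inv h) uh) V.
rewrite /act invmxK invmx1 det1 det_inv /= expr1z exprN1 invrK mul1r => <-.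
by apply: pf_ext hpf _ => x i j; rewrite invmx1 mulmx1.
Qed.

Lemma f_right g V : g \in unitmx -> f (fun b => V b *m g) = \det g * f V.
Proof.
move=> ug; have := hs.2 g 1%:M ug (unitmx1 k 3) V.
rewrite /act invmxK invmx1 det1 /= expr1z exprN1 invr1 mulr1 => <-.
by apply: pf_ext hpf _ => x i j; rewrite mul1mx.
Qed.

Lemma f_conj P V : P \in unitmx -> f (fun b => invmx P *m V b *m P) = f V.
Proof.
move=> uP; have := hs.2 P P uP uP V.
rewrite /act invmxK /= expr1z exprN1 mulfV ?mul1r => [<-//|].
by rewrite -unitfE -unitmxE.
Qed.

Definition setrow (B : rep3 k) (i : 'I_3) (y : 'M[k]_3) : rep3 k :=
  fun b => \matrix_(i', j) if i' == i then y b j else B b i' j.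

Lemma row_add B i y z : f (setrow B i (y + z)) = f (setrow B i y) + f (setrow B i z).
Proof.
apply: (hom_add hchar (phi := fun y => f (setrow B i y))).
- move=> l y0 ln0.
  pose D : 'M[k]_3 := diag_mx (\row_a (if a == i then l else 1)).
  have dD : \det D = l.
    rewrite det_diag (bigD1 i) //= mxE eqxx big1 ?mulr1 // => a /negbTE ai.
    by rewrite mxE ai.
  have uD : D \in unitmx by rewrite unitmxE dD unitfE.
  transitivity (\det D * f (setrow B i y0)); last by rewrite dD.
  rewrite -(f_left _ uD); apply: pf_ext hpf _ => x a j.
  rewrite /D mul_diag_mx !mxE; case: (a == i); rewrite ?mul1r //.
- move=> y0 z0; have [R hR] := pf_line (setrow B i y0) (setrow (fun _ => 0) i z0) hpf.
  exists R => s; rewrite hR; apply: pf_ext hpf _ => x a j.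
  by rewrite !mxE; case: eqP => _; rewrite ?mxE ?mulr0 ?addr0.
Qed.

Lemma row_zero B i : f (setrow B i 0) = 0.
Proof.
have := row_add B i 0 0; rewrite addr0 => h.
by apply: (@addrI _ (f (setrow B i 0))); rewrite addr0 -h.
Qed.

Lemma row_sum B i (Y : 'I_3 -> 'M[k]_3) :
  f (setrow B i (\sum_b Y b)) = \sum_b f (setrow B i (Y b)).
Proof.
elim/big_rec2: _ => [|b x y _ <-]; first exact: row_zero.
by rewrite row_add.
Qed.

Definition keep (V : rep3 k) (i b : 'I_3) : rep3 k :=
  fun b' => \matrix_(i', j) if (i' == i) && (b' != b) then 0 else V b' i' j.

Lemma split_row V i : f V = \sum_b f (keep V i b).
Proof.
pose Y := fun b : 'I_3 => \matrix_(b', j) if b' == b then V b' i j else (0 : k).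
have -> : f V = f (setrow V i (\sum_b Y b)).
  apply: pf_ext hpf _ => x a j; rewrite !mxE summxE.
  case: eqP => [->|_] //.
  rewrite (bigD1 x) //= mxE eqxx big1 ?addr0 // => b /negbTE bx.
  by rewrite mxE eq_sym bx.
rewrite row_sum; apply: eq_bigr => b _; apply: pf_ext hpf _ => x a j.
rewrite !mxE; case: eqP => [->|_] //=; case: eqP => [->|_] //=.
Qed.

Definition tri (a0 a1 a2 : 'I_3) (i : 'I_3) : 'I_3 :=
  if nat_of_ord i == 0%N then a0 else if nat_of_ord i == 1%N then a1 else a2.
Definition cfg (a : 'I_3 -> 'I_3) (M : 'M[k]_3) : rep3 k :=
  fun b => \matrix_(i, j) if a i == b then M i j else 0.
Definition Ma (a : 'I_3 -> 'I_3) (V : rep3 k) : 'M[k]_3 := \matrix_(i, j) V (a i) i j.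

Lemma decomp V : f V = \sum_a0 \sum_a1 \sum_a2
   f (cfg (tri a0 a1 a2) (Ma (tri a0 a1 a2) V)).
Proof.
rewrite (split_row V (inord 0)); apply: eq_bigr => a0 _.
rewrite (split_row _ (inord 1)); apply: eq_bigr => a1 _.
rewrite (split_row _ (inord 2)); apply: eq_bigr => a2 _.
apply: pf_ext hpf _ => b i j; rewrite !mxE.
have e : forall (x : 'I_3) n, (n < 3)%N -> (x == inord n) = (nat_of_ord x == n).
  by move=> x n hn; rewrite -val_eqE /= inordK.
rewrite !e //; case: i => [[|[|[|//]]] hi] /=; rewrite /tri /=;
  by case: (eqVneq b _) => [->|h]; rewrite ?eqxx // h eq_sym (negbTE h).
Qed.


Lemma pf_comp (g : rep3 k -> k) (L : rep3 k -> rep3 k) : is_polyfun g ->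
  (forall x i j, is_polyfun (fun V => L V x i j)) -> is_polyfun (fun V => g (L V)).
Proof.
move=> [t ht] hL; apply: (@pf_eq k _ (fun V => peval t (L V))) => [V|]; first by rewrite ht.
elim: t {ht} => /= [x i j|c|a IHa b IHb|a IHa b IHb]; first exact: hL.
- exact: pf_const.
- exact: pf_add.
- exact: pf_mul.
Qed.

Lemma cfg_det a M : f (cfg a M) = \det M * f (cfg a 1%:M).
Proof.
pose F := fun V : rep3 k => f (cfg a (V 0)) + - (\det (V 0) * f (cfg a 1%:M)).
have hF : is_polyfun F.
  apply: pf_add; last apply: pf_opp; last apply: pf_mul; last exact: pf_const.
    apply: pf_comp hpf _ => x i j; apply: (@pf_eq k _ (fun V => if a i == x then V 0 i j else 0)).
      by move=> V; rewrite mxE.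
    by case: (a i == x); [exact: pf_var | exact: pf_const].
  by apply: pf_det; exact: pfmx_var.
suff H0 : forall V, V 0 \in unitmx -> F V = 0.
  by move/eqP: (pf_dense hchar hF H0 (fun _ => M)); rewrite /F /= addr_eq0 opprK => /eqP.
move=> V uV; rewrite /F /= -(f_right _ uV); apply/eqP; rewrite addr_eq0 opprK; apply/eqP.
apply: pf_ext hpf _ => x i j; rewrite !mxE.
rewrite (bigD1 i) //= big1 ?addr0 => [|l /negbTE li]; rewrite !mxE ?eqxx ?(eq_sym i) ?li; case: (a i == x); rewrite ?mul1r ?mul0r ?mulr0 //.
Qed.


Lemma triE a0 a1 a2 : tri a0 a1 a2 (inord 0) = a0 /\ tri a0 a1 a2 (inord 1) = a1 /\ tri a0 a1 a2 (inord 2) = a2.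
Proof. by rewrite /tri !inordK. Qed.

Definition Pm : 'M[k]_3 := mkm (fun i j => if j == nx i then 1 else 0).
Definition Qm : 'M[k]_3 := mkm (fun i j => if i == nx j then 1 else 0).

Lemma PQ : Pm *m Qm = 1%:M.
Proof.
rewrite /Pm /Qm mulmkm; apply/matrixP => i j; rewrite !mxE.
case: i => [[|[|[|//]]] ?]; case: j => [[|[|[|//]]] ?] /=; by rewrite ?mul0r ?mul1r ?addr0 ?add0r.
Qed.

Lemma uP : Pm \in unitmx. Proof. by case: (mulmx1_unit PQ). Qed.
Lemma invP : invmx Pm = Qm.
Proof. by rewrite -[invmx Pm]mulmx1 -PQ mulmxA mulVmx ?mul1mx //; exact: uP. Qed.

Lemma cyc a0 a1 a2 : f (cfg (tri a2 a0 a1) 1%:M) = f (cfg (tri a0 a1 a2) 1%:M).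
Proof.
rewrite -[RHS](f_conj _ uP) invP; apply: pf_ext hpf _ => b i j.
rewrite (mkmE (cfg (tri a0 a1 a2) 1%:M b)) (mkmE (cfg (tri a2 a0 a1) 1%:M b)) /Pm /Qm !mulmkm !mxE.
have [t0 [t1 t2]] := triE a0 a1 a2; have [s0 [s1 s2]] := triE a2 a0 a1.
have ne : forall m n, (m < 3)%N -> (n < 3)%N -> (inord m == inord n :> 'I_3) = (m == n).
  by move=> m n hm hn; rewrite -val_eqE /= !inordK.
case: i => [[|[|[|//]]] ?]; case: j => [[|[|[|//]]] ?] /=;
  rewrite ?t0 ?t1 ?t2 ?s0 ?s1 ?s2 ?ne // /= ?mulr0n ?mulr1n; kring.
Qed.

Lemma detMa (W : rep3 k) (hsk : forall x, skew_sym (W x)) a0 a1 a2 :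
  \det (Ma (tri a0 a1 a2) W) =
  W a0 (inord 0) (inord 1) * W a1 (inord 1) (inord 2) * W a2 (inord 2) (inord 0)
  - W a0 (inord 2) (inord 0) * W a1 (inord 0) (inord 1) * W a2 (inord 1) (inord 2).
Proof.
have [t0 [t1 t2]] := triE a0 a1 a2.
rewrite (mkmE (Ma _ W)) det3 !mxE t0 t1 t2.
rewrite !(skew_diag hchar (hsk _)) (skew_entry (hsk a0) (inord 2) (inord 0)).
rewrite (skew_entry (hsk a1) (inord 0) (inord 1)) (skew_entry (hsk a2) (inord 1) (inord 2)).
kring.
Qed.

Lemma part2 (W : rep3 k) (hsk : forall x, skew_sym (W x)) : f W = 0.
Proof.
pose al := fun x => W x (inord 0) (inord 1).
pose be := fun x => W x (inord 1) (inord 2).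
pose ga := fun x => W x (inord 2) (inord 0).
pose c := fun a0 a1 a2 => f (cfg (tri a0 a1 a2) 1%:M).
pose X := fun a0 a1 a2 => al a0 * be a1 * ga a2 * c a0 a1 a2.
have -> : f W = \sum_a0 \sum_a1 \sum_a2 (X a0 a1 a2 - X a1 a2 a0).
  rewrite decomp; apply: eq_bigr => a0 _; apply: eq_bigr => a1 _; apply: eq_bigr => a2 _.
  rewrite cfg_det detMa // /X /c -(cyc a1 a2 a0) /al /be /ga.
  move: (f _) => cc; kring.
have -> : \sum_a0 \sum_a1 \sum_a2 (X a0 a1 a2 - X a1 a2 a0) =
    \sum_a0 \sum_a1 \sum_a2 X a0 a1 a2 - \sum_a0 \sum_a1 \sum_a2 X a1 a2 a0.
  rewrite -sumrB; apply: eq_bigr => a0 _; rewrite -sumrB; apply: eq_bigr => a1 _.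
  by rewrite -sumrB.
rewrite [X in _ - X]exchange_big /=; apply/eqP; rewrite subr_eq0; apply/eqP.
apply: eq_bigr => a1 _; rewrite exchange_big //.
Qed.

End MainE.

Theorem mainTheorem11 (k : closedFieldType) (hchar : [pchar k] =i pred0)
  (W : rep3 k) (hskew : forall x, skew_sym (W x)) (hind : lin_indep3 W) :
  (exists n : nat, (0 < n)%N /\ inS W ((n%:Z)%R, (- n%:Z)%R))
  /\ ~ inS W (1%R, (-1)%R).
Proof.
split.
  exists 2%N; split => //; exists (@f1 k); split; first exact: f1_semi hchar.
  by have := f1_W hchar hskew hind.
move=> [f [hsf hfW]].
by move: hfW; rewrite (part2 hchar hsf hskew) eqxx.
Qed.
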